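(* The matrix $U=\frac{1}{\sqrt2}\left(S_0\otimes I_2\otimes I_2+S_1\otimes\sigma_3\otimes\sigma_3+S_2\otimes\sigma_1\otimes\sigma_1+S_3\otimes\sigma_2\otimes\sigma_2\right)$ on $\mathbb{C}^2\otimes\mathbb{C}^2\otimes\mathbb{C}^2$ has $\mathrm{sr}(U)=4$.
   Context: $S_0=\begin{bmatrix}1&0\\0&0\end{bmatrix}$, $S_1=\begin{bmatrix}0&1\\0&0\end{bmatrix}$, $S_2=\begin{bmatrix}0&0\\1&0\end{bmatrix}$, $S_3=\begin{bmatrix}0&0\\0&1\end{bmatrix}$. $I_2$ is the $2\times2$ identity and $\sigma_1=\begin{bmatrix}0&1\\1&0\end{bmatrix}$, $\sigma_2=\begin{bmatrix}0&-i\\i&0\end{bmatrix}$, $\sigma_3=\begin{bmatrix}1&0\\0&-1\end{bmatrix}$ are the Pauli matrices. For a matrix $U$ on $\mathbb{C}^2\otimes\mathbb{C}^2\otimes\mathbb{C}^2$ (systems $A,B,C$), its Schmidt rank $\mathrm{sr}(U)$ is the least integer $r$ such that $U=\sum_{j=1}^r A_j\otimes B_j\otimes C_j$ with $A_j,B_j,C_j$ complex $2\times 2$ matrices (i.e. the tensor rank of $U$). *)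

(* Defs.v *)
From HB Require Import structures.
From mathcomp Require Import all_boot all_order all_algebra.
From mathcomp Require Import complex mxtens.
From mathcomp Require Import reals.
Set Implicit Arguments. Unset Strict Implicit. Unset Printing Implicit Defensive.
Import Order.TTheory GRing.Theory Num.Theory.
Local Open Scope ring_scope.
Local Open Scope complex_scope.

Section Defs.
Variable R : realType.
Local Notation C := R[i].

Definition mx2 (a b c d : C) : 'M[C]_2 :=
  \matrix_(i < 2, j < 2)
    (if i == 0 :> nat then (if j == 0 :> nat then a else b)
     else (if j == 0 :> nat then c else d)).

Definition S0 : 'M[C]_2 := mx2 1 0 0 0.
Definition S1 : 'M[C]_2 := mx2 0 1 0 0.
Definition S2 : 'M[C]_2 := mx2 0 0 1 0.
Definition S3 : 'M[C]_2 := mx2 0 0 0 1.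
Definition I2 : 'M[C]_2 := 1%:M.
Definition sigma1 : 'M[C]_2 := mx2 0 1 1 0.
Definition sigma2 : 'M[C]_2 := mx2 0 (- 'i) 'i 0.
Definition sigma3 : 'M[C]_2 := mx2 1 0 0 (-1).

Definition kron3 (A B D : 'M[C]_2) : 'M[C]_(2 * 2 * 2) := (A *t B) *t D.

Definition sr_le (U : 'M[C]_(2 * 2 * 2)) (r : nat) : Prop :=
  exists (A B D : 'I_r -> 'M[C]_2), U = \sum_(j < r) kron3 (A j) (B j) (D j).

Definition schmidt_rank_is (U : 'M[C]_(2 * 2 * 2)) (r : nat) : Prop :=
  sr_le U r /\ forall r', sr_le U r' -> (r <= r')%N.

Definition Umat : 'M[C]_(2 * 2 * 2) :=
  ((Num.sqrt (2 : R))%:C)^-1 *: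
    (kron3 S0 I2 I2 + kron3 S1 sigma3 sigma3
     + kron3 S2 sigma1 sigma1 + kron3 S3 sigma2 sigma2).
End Defs.

(* Main.v *)
Require Import Defs.
From mathcomp Require Import all_boot all_algebra complex reals.
From HB Require Import structures.
From mathcomp Require Import all_order mxtens ring.
Set Implicit Arguments. Unset Strict Implicit. Unset Printing Implicit Defensive.
Import Order.TTheory GRing.Theory Num.Theory.

Section Helpers.
Local Open Scope ring_scope.
Local Open Scope complex_scope.
Variable R : realType.
Local Notation C := R[i].

Definition o0 : 'I_2 := ord0.
Definition o1 : 'I_2 := ord_max.
Definition e3 (a b d : 'I_2) : 'I_(2*2*2) := mxtens_index (mxtens_index (a, b), d).

Lemma kron3E (A B D : 'M[C]_2) a1 b1 d1 a2 b2 d2 :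
  kron3 A B D (e3 a1 b1 d1) (e3 a2 b2 d2) = A a1 a2 * B b1 b2 * D d1 d2.
Proof. by rewrite /kron3 /e3 !tensmxE. Qed.

Lemma s_neq0 : (Num.sqrt (2 : R))%:C != 0 :> C.
Proof.
have h2 : Num.sqrt (2 : R) != 0 by apply: lt0r_neq0; rewrite sqrtr_gt0 ltr0n.
by apply: contra h2 => /eqP h; apply/eqP; exact: (complexI h).
Qed.

Lemma lower r (A B D : 'I_r -> 'M[C]_2) :
  Umat R = \sum_(j < r) kron3 (A j) (B j) (D j) -> (4 <= r)%N.
Proof.
move=> H; rewrite leqNgt; apply/negP => Hr.
pose f (a : nat) (j : 'I_r) : C :=
  if a == 0%N then A j o0 o0 else if a == 1%N then A j o0 o1
  else if a == 2%N then A j o1 o0 else A j o1 o1.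
pose al : 'M[C]_(4, r) := \matrix_(a, j) f (val a) j.
have Kn0 : kermx al != 0.
  rewrite kermx_eq0 /row_free neq_ltn; apply/orP; left.
  exact: leq_ltn_trans (rank_leq_col al) Hr.
case: (pickP (fun i => row i (kermx al) != 0)) => [i Hi | H0]; last first.
  move/negP: Kn0; apply; apply/eqP/row_matrixP => i.
  by move: (H0 i) => /negbFE/eqP ->; rewrite row0.
set c := row i (kermx al) in Hi.
have Hc : c *m al = 0 by apply/sub_kermxP; exact: row_sub.
pose cf : nat -> C := fun k => c 0 (inord k).
have cE : forall a : 'I_4, c 0 a = cf a by move=> a; rewrite /cf inord_val.
have key : forall j, cf 0 * A j o0 o0 + cf 1 * A j o0 o1 + cf 2 * A j o1 o0
                     + cf 3 * A j o1 o1 = 0.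
  move=> j; have := congr1 (fun M : 'M[C]_(1, r) => M 0 j) Hc => /=.
  rewrite !mxE !big_ord_recr big_ord0 /= !cE !mxE /= /f /= add0r => h; exact: h.
have comb : forall b1 b2 d1 d2,
  cf 0 * Umat R (e3 o0 b1 d1) (e3 o0 b2 d2) + cf 1 * Umat R (e3 o0 b1 d1) (e3 o1 b2 d2)
  + cf 2 * Umat R (e3 o1 b1 d1) (e3 o0 b2 d2) + cf 3 * Umat R (e3 o1 b1 d1) (e3 o1 b2 d2) = 0.
  move=> b1 b2 d1 d2; rewrite H !summxE !mulr_sumr -!big_split /=.
  apply: big1 => j _; rewrite !kron3E; have := key j => kj.
  transitivity ((cf 0 * A j o0 o0 + cf 1 * A j o0 o1 + cf 2 * A j o1 o0
                     + cf 3 * A j o1 o1) * (B j b1 b2 * D j d1 d2)); first by ring.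
  by rewrite kj mul0r.
set s := (Num.sqrt (2 : R))%:C^-1.
have s0 : s != 0 by rewrite invr_eq0 s_neq0.
have solve : forall X : C, s * X = 0 -> X = 0.
  by move=> X /eqP; rewrite mulf_eq0 (negbTE s0) /= => /eqP.
have E1 := comb o0 o0 o0 o0.
have E2 := comb o0 o0 o1 o1.
have E3 := comb o0 o1 o0 o1.
have E4 := comb o0 o1 o1 o0.
move: E1 E2 E3 E4; rewrite /Umat !mxE /e3 !mxtens_indexK /= -/s.
move=> E1 E2 E3 E4.
rewrite ?(mulr1n, mulr0n, mul0r, mulr0, mul1r, mulr1, addr0, add0r) in E1 E2 E3 E4.
have solve' : forall X : C, X * s = 0 -> X = 0.
  by move=> X /eqP; rewrite mulf_eq0 (negbTE s0) orbF => /eqP.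
rewrite mulrN1 mulrN in E2.
rewrite mulrNN ['i%C * _]sqr_i mulrN1 mulrN in E3.
rewrite mulNr ['i%C * _]sqr_i opprK mulr1 in E4.
have F1 : cf 0 + cf 1 = 0 by apply: solve'; rewrite mulrDl.
have F2 : cf 0 - cf 1 = 0 by apply: solve'; rewrite mulrBl.
have F3 : cf 2 + cf 3 * -1 = 0 by apply: solve'; rewrite mulrN1 mulrBl.
have F4 : cf 2 - cf 3 * -1 = 0 by apply: solve'; rewrite mulrN1 opprK mulrDl.
have two0 : (2 : C) != 0 by rewrite pnatr_eq0.
have G0 : cf 0 = 0.
  have : cf 0 *+ 2 = 0.
    by transitivity ((cf 0 + cf 1) + (cf 0 - cf 1)); [ring | rewrite F1 F2 addr0].
  by move/eqP; rewrite mulrn_eq0 /= => /eqP.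
have G1 : cf 1 = 0 by move: F1; rewrite G0 add0r.
have G2 : cf 2 = 0.
  have : cf 2 *+ 2 = 0.
    by transitivity ((cf 2 + cf 3 * -1) + (cf 2 - cf 3 * -1)); [ring | rewrite F3 F4 addr0].
  by move/eqP; rewrite mulrn_eq0 /= => /eqP.
have G3 : cf 3 = 0 by move: F3; rewrite G2 add0r mulrN1 => /eqP; rewrite oppr_eq0 => /eqP.
move/negP: Hi; apply; apply/eqP/rowP => a; rewrite [c 0 a]cE mxE.
by case: a => [[|[|[|[|k]]]] Hk] //=.
Qed.

Lemma kron3Zl (a : C) (A B D : 'M[C]_2) : kron3 (a *: A) B D = a *: kron3 A B D.
Proof. by apply/matrixP => i j; rewrite !mxE !mulrA. Qed.

Definition pick4 (k : nat) (X0 X1 X2 X3 : 'M[C]_2) : 'M[C]_2 :=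
  match k with 0 => X0 | 1 => X1 | 2 => X2 | _ => X3 end.

Lemma upper : sr_le (Umat R) 4.
Proof.
exists (fun j : 'I_4 => (Num.sqrt (2 : R))%:C^-1 *: pick4 j (S0 R) (S1 R) (S2 R) (S3 R)).
exists (fun j : 'I_4 => pick4 j (I2 R) (sigma3 R) (sigma1 R) (sigma2 R)).
exists (fun j : 'I_4 => pick4 j (I2 R) (sigma3 R) (sigma1 R) (sigma2 R)).
rewrite !big_ord_recr big_ord0 /= add0r !kron3Zl /Umat.
Time (apply/matrixP => i j; rewrite !mxE !mulrDr).
Time by [].
Qed.
End Helpers.

Theorem mainTheorem7 (R : realType) : schmidt_rank_is (Umat R) 4.
Proof.
split; last by move=> r' [A [B [D H]]]; exact: lower H.
exact: upper.
Qed.
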